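(* Let $m,k\in\mathbb{N}$. Then \[ {}_3F_2\left[\begin{array}{r} -2m,\ 1+k,\ 1+k;\\ -2m-k,\ -2m-k;\end{array}1\right]_{2m}=\frac{(1+k)_{m}(1+k)_{m}2^{2m}\left(\frac{1}{2}\right)_m(2+2k)_{2m}}{(1+k)_{2m}(1+k)_{2m}(2+2k)_{m}}. \]
   Context: $\mathbb{N}=\{1,2,3,\dots\}$. For $a\in\mathbb{C}$ and $n\in\mathbb{N}_0$, $(a)_0=1$ and $(a)_n=a(a+1)\cdots(a+n-1)$. For $N\in\mathbb{N}_0$, ${}_3F_2\left[\begin{array}{r} a_1,a_2,a_3;\\ b_1,b_2;\end{array}z\right]_N=\sum_{n=0}^{N}\frac{(a_1)_n(a_2)_n(a_3)_n}{(b_1)_n(b_2)_n}\frac{z^n}{n!}$ (the sum of the first $N+1$ terms), defined whenever $(b_1)_n(b_2)_n\neq0$ for $0\le n\le N$. *)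

(* Defs.v *)
From mathcomp Require Import all_boot all_algebra.
Set Implicit Arguments. Unset Strict Implicit. Unset Printing Implicit Defensive.
Import GRing.Theory.
Local Open Scope ring_scope.

Definition poch (a : rat) (n : nat) : rat := \prod_(i < n) (a + i%:R).

Definition F32_trunc (a1 a2 a3 b1 b2 z : rat) (N : nat) : rat :=
  \sum_(n < N.+1)
    (poch a1 n * poch a2 n * poch a3 n) / (poch b1 n * poch b2 n)
      * z ^+ n / (n`!)%:R.

(* Main.v *)
Require Import Defs.
From mathcomp Require Import all_boot all_algebra ring zify lra.
Import GRing.Theory Num.Theory.
Local Open Scope ring_scope.

Definition fr (n : nat) : rat := (n`!)%:R.

Lemma fr_neq0 n : fr n != 0.
Proof. by rewrite /fr pnatr_eq0 -lt0n fact_gt0. Qed.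

Lemma frS n : fr n.+1 = n.+1%:R * fr n.
Proof. by rewrite /fr factS natrM. Qed.

Lemma binr n p : (p <= n)%N -> ('C(n, p))%:R = fr n / (fr p * fr (n - p)).
Proof.
move=> h; have h1 := fr_neq0 p; have h2 := fr_neq0 (n - p).
rewrite /fr in h1 h2 *; rewrite -(bin_fact h) !natrM; field.
by rewrite h1 h2.
Qed.

Lemma poch_S a n : poch a n.+1 = poch a n * (a + n%:R).
Proof. by rewrite /poch big_ord_recr. Qed.

Lemma poch0 a : poch a 0 = 1.
Proof. by rewrite /poch big_ord0. Qed.

Lemma poch_neg N n : (n <= N)%N -> poch (- N%:R) n * fr (N - n) = (-1) ^+ n * fr N.
Proof.
elim: n => [|n IH] h; first by rewrite poch0 subn0 !mul1r.
have h' : (n <= N)%N by lia.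
have e : (N - n = (N - n.+1).+1)%N by lia.
move: (IH h'); rewrite e frS poch_S exprS.
have -> : ((N - n.+1).+1%:R : rat) = N%:R - n%:R by rewrite -e natrB.
move=> H; rewrite -[RHS]mulrA -H; ring.
Qed.

Lemma poch_k k n : poch (1 + k%:R) n * fr k = fr (k + n).
Proof.
elim: n => [|n IH]; first by rewrite poch0 mul1r addn0.
rewrite poch_S addnS frS -IH -addn1 natrD; ring.
Qed.

Lemma poch_gt0 a n : 0 < a -> 0 < poch a n.
Proof.
move=> ha; rewrite /poch; apply: prodr_gt0 => i _.
by rewrite ltr_wpDr // ler0n.
Qed.

Definition X0 (m k : rat) : rat := -(6+16 * k+10 * k^+2+2 * k^+3+16 * m+28 * m * k+9 * m * k^+2+14 * m^+2+12 * m^+2 * k+4 * m^+3).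
Definition xx (m k n : rat) : rat := (m+1) * (n^+2 - (2 * m+3) * n) + X0 m k.
Definition al (m k : rat) : rat := 2 * (m+1) * (2 * k+m+2).
Definition cc (m k : rat) : rat := -((2 * m+1) * (2 * m+2) * 4 * (k+m+1)^+3 * (2 * k+2 * m+3)).

Section Main.
Variable k : nat.

Definition s (m n : nat) : rat :=
  (-1) ^+ n * ('C(2 * m, n))%:R * (fr (k + n) * fr (2 * m + k - n)) ^+ 2.
Definition U (m : nat) : rat := \sum_(n < (2 * m).+1) s m n.
Definition g (m n : nat) : rat :=
  if n is n'.+1 then
    (-1) ^+ n * (2 * m + 2)%:R * ('C(2 * m + 1, n'))%:R * xx m%:R k%:R n%:R
      * (fr (n' + k) * fr (2 * m + k + 1 - n')) ^+ 2
  else 0.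
Definition sp (m n : nat) : rat := if n is n'.+1 then s m n' else 0.

Lemma step_gen m p : (p <= 2 * m)%N ->
  al m%:R k%:R * s m.+1 p.+1 + cc m%:R k%:R * sp m p.+1 = g m p.+2 - g m p.+1.
Proof.
move=> hp; rewrite /s /sp /g.
have [q hq] : exists q, (2 * m = p + q)%N by exists (2 * m - p)%N; lia.
have E1 : (2 * m.+1 + k - p.+1 = (q + k).+1)%N by lia.
have E2 : (2 * m + k - p = q + k)%N by lia.
have E3 : (2 * m + k + 1 - p.+1 = q + k)%N by lia.
have E4 : (2 * m + k + 1 - p = (q + k).+1)%N by lia.
have C1 : ('C(2 * m.+1, p.+1))%:R = fr (2 * m).+2 / (fr p.+1 * fr q.+1).
  rewrite binr; last by lia.
  have -> : (2 * m.+1 = (2 * m).+2)%N by lia.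
  have -> : ((2 * m).+2 - p.+1 = q.+1)%N by lia.
  done.
have C2 : ('C(2 * m, p))%:R = fr (2 * m) / (fr p * fr q).
  by rewrite binr //; have -> : (2 * m - p = q)%N by lia.
have C3 : ('C(2 * m + 1, p.+1))%:R = fr (2 * m).+1 / (fr p.+1 * fr q).
  rewrite binr; last by lia.
  rewrite addn1; have -> : ((2 * m).+1 - p.+1 = q)%N by lia.
  done.
have C4 : ('C(2 * m + 1, p))%:R = fr (2 * m).+1 / (fr p * fr q.+1).
  rewrite binr; last by lia.
  rewrite addn1; have -> : ((2 * m).+1 - p = q.+1)%N by lia.
  done.
rewrite /s E1 E2 E3 E4 C1 C2 C3 C4.
have -> : (k + p.+1 = (k + p).+1)%N by lia.
have -> : (p.+1 + k = (k + p).+1)%N by lia.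
have -> : (p + k = k + p)%N by lia.
rewrite (frS (k + p)) (frS (q + k)) (frS (2 * m).+1) (frS (2 * m)) (frS p) (frS q).
have hm : (m%:R : rat) = (p%:R + q%:R) / 2.
  by apply: (mulIf (_ : (2:rat) != 0)) => //; rewrite mulfVK // -natrD -hq natrM mulrC.
have hm2 : ((2 * m)%:R : rat) = p%:R + q%:R by rewrite hq natrD.
have S1 n : (n.+1%:R : rat) = n%:R + 1 by rewrite -addn1 natrD.
have S2 n : (n.+2%:R : rat) = n%:R + 2 by rewrite -addn2 natrD.
rewrite !exprS expr0 /xx /X0 /al /cc.
rewrite !S1 !natrD hm.
have h1 := fr_neq0 p; have h2 := fr_neq0 q.
field.
by rewrite -!S1 !pnatr_eq0 -!lt0n !fact_gt0.
Qed.

Lemma S1 n : (n.+1%:R : rat) = n%:R + 1.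
Proof. by rewrite -addn1 natrD. Qed.

Lemma step0 m : al m%:R k%:R * s m.+1 0 + cc m%:R k%:R * sp m 0 = g m 1 - g m 0.
Proof.
rewrite /s /sp /g addn0 subn0 add0n subn0 !bin0 mulr0 addr0 subr0.
have -> : (2 * m.+1 + k = (2 * m + k + 1).+1)%N by lia.
rewrite frS !exprS !expr0 /xx /X0 /al /cc !S1 !natrD.
ring.
Qed.

Lemma sgn_even m : (-1) ^+ (2 * m)%N = (1 : rat).
Proof. by rewrite -signr_odd oddM. Qed.

Lemma stepE m : al m%:R k%:R * s m.+1 (2 * m).+2 + cc m%:R k%:R * sp m (2 * m).+2
   = g m (2 * m).+3 - g m (2 * m).+2.
Proof.
rewrite /sp /s /g.
rewrite (bin_small (_ : (2 * m < (2 * m).+1)%N)) //.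
rewrite (bin_small (_ : (2 * m + 1 < (2 * m).+2)%N)); last by lia.
have -> : (2 * m.+1 = (2 * m).+2)%N by lia.
rewrite binn.
have -> : (2 * m + 1 = (2 * m).+1)%N by lia.
rewrite binn.
have -> : ((2 * m).+2 + k - (2 * m).+2 = k)%N by lia.
have -> : (2 * m + k + 1 - (2 * m).+1 = k)%N by lia.
have -> : (k + (2 * m).+2 = (k + (2 * m).+1).+1)%N by lia.
have -> : ((2 * m).+1 + k = k + (2 * m).+1)%N by lia.
rewrite frS -[(2 * m).+2]addn2 exprD sgn_even.
rewrite !exprS !expr0 /xx /X0 /al /cc !S1 !natrD.
ring.
Qed.

Lemma step m n : (n < (2 * m).+3)%N ->
  al m%:R k%:R * s m.+1 n + cc m%:R k%:R * sp m n = g m n.+1 - g m n.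
Proof.
case: n => [|p] h; first exact: step0.
have [hp|hp] := leqP p (2 * m); first exact: step_gen.
have -> : p = (2 * m).+1 by lia.
exact: stepE.
Qed.

Lemma recur m : al m%:R k%:R * U m.+1 + cc m%:R k%:R * U m = 0.
Proof.
have T : \sum_(n < (2 * m).+3) (g m n.+1 - g m n) = 0.
  rewrite -(big_mkord xpredT (fun n => g m n.+1 - g m n)) telescope_sumr //.
  rewrite /g (bin_small (_ : (2 * m + 1 < (2 * m).+2)%N)); last by lia.
  by rewrite mulr0 !mul0r subr0.
rewrite -T; symmetry.
rewrite (eq_bigr (fun n : 'I_(2 * m).+3 => al m%:R k%:R * s m.+1 n + cc m%:R k%:R * sp m n)); last first.
  by move=> i _; rewrite step.
rewrite big_split /= -!mulr_sumr.
have -> : U m.+1 = \sum_(n < (2 * m).+3) s m.+1 n.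
  by rewrite /U; have -> : ((2 * m.+1).+1 = (2 * m).+3)%N by lia.
congr (_ + _ * _).
rewrite -(big_mkord xpredT (sp m)) big_nat_recl // add0r /=.
rewrite big_nat_recr //= /s (bin_small (_ : (2 * m < (2 * m).+1)%N)) // mulr0 mul0r addr0.
by rewrite /U big_mkord.
Qed.
End Main.

Definition R (k m : nat) : rat :=
  poch (1 + k%:R) m * poch (1 + k%:R) m * 2 ^+ (2 * m) * poch (1 / 2) m
      * poch (2 + 2 * k%:R) (2 * m)
    / (poch (1 + k%:R) (2 * m) * poch (1 + k%:R) (2 * m) * poch (2 + 2 * k%:R) m).
Definition D (k m : nat) : rat := fr k * fr (2 * m + k).

Lemma Rrec k m : al m%:R k%:R * (D k m.+1 ^+ 2 * R k m.+1) + cc m%:R k%:R * (D k m ^+ 2 * R k m) = 0.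
Proof.
rewrite /R /D.
have -> : (2 * m.+1 = (2 * m).+2)%N by lia.
rewrite !poch_S !exprS.
rewrite (_ : ((2 * m).+2 + k = (2 * m + k).+2)%N); last by lia.
rewrite !frS.
have h1 := fr_neq0 k; have h2 := fr_neq0 (2 * m + k).
have p1 : poch (1 + k%:R) (2 * m) != 0 by rewrite lt0r_neq0 // poch_gt0 // ltr_wpDr // ler0n.
have p2 : poch (2 + 2 * k%:R) m != 0.
  by rewrite lt0r_neq0 // poch_gt0 // ltr_wpDr // mulr_ge0 // ler0n.
set A := poch (1 + k%:R) m in p2 *; set B := poch (1 + k%:R) (2 * m) in p1 *.
set C := poch (2 + 2 * k%:R) m in p2 *; set E := poch (2 + 2 * k%:R) (2 * m).
set F := poch (1 / 2) m; pose G : rat := 2 ^+ (2 * m); rewrite -/G.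
set H := fr k in h1 *; set I := fr (2 * m + k) in h2 *.
clearbody A B C E F G H I.
rewrite !S1 !natrD /al /cc.
field.
have hk0 : (0 : rat) <= k%:R by rewrite ler0n.
have hm0 : (0 : rat) <= m%:R by rewrite ler0n.
rewrite p1 p2 /=; apply/and3P; split; apply: lt0r_neq0; lra.
Qed.

Lemma al_neq0 m k : al m%:R k%:R != 0.
Proof.
have hk0 : (0 : rat) <= k%:R by rewrite ler0n.
have hm0 : (0 : rat) <= m%:R by rewrite ler0n.
rewrite /al; apply: lt0r_neq0; rewrite !mulr_gt0 //; lra.
Qed.

Lemma UR k m : U k m = D k m ^+ 2 * R k m.
Proof.
elim: m => [|m IH].
  rewrite /U /R /D big_ord1 /s !poch0 !expr0 addn0 subn0 bin0 muln0 add0n.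
  by rewrite !mulr1 !mul1r.
have h1 := recur k m; have h2 := Rrec k m.
rewrite IH in h1.
apply: (mulfI (al_neq0 m k)).
have e1 : al m%:R k%:R * U k m.+1 = - (cc m%:R k%:R * (D k m ^+ 2 * R k m)).
  by apply/eqP; rewrite -addr_eq0; apply/eqP.
have e2 : al m%:R k%:R * (D k m.+1 ^+ 2 * R k m.+1) = - (cc m%:R k%:R * (D k m ^+ 2 * R k m)).
  by apply/eqP; rewrite -addr_eq0; apply/eqP.
by rewrite e1 e2.
Qed.

Lemma lhs k m : F32_trunc (- (2 * m)%:R) (1 + k%:R) (1 + k%:R)
            (- (2 * m)%:R - k%:R) (- (2 * m)%:R - k%:R) 1 (2 * m) = U k m / D k m ^+ 2.
Proof.
have -> : - (2 * m)%:R - k%:R = - ((2 * m + k)%:R) :> rat by rewrite natrD opprD.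
rewrite /F32_trunc /U mulr_suml; apply: eq_bigr => -[n hn] _ /=.
have hn' : (n <= 2 * m)%N by lia.
have hn2 : (n <= 2 * m + k)%N by lia.
have A := @poch_neg _ _ hn'; have B := poch_k k n; have C := @poch_neg _ _ hn2.
have f1 := fr_neq0 (2 * m - n); have f2 := fr_neq0 k; have f3 := fr_neq0 (2 * m + k - n).
have A' : poch (- (2 * m)%:R) n = (-1) ^+ n * fr (2 * m) / fr (2 * m - n) by rewrite -A mulfK.
have B' : poch (1 + k%:R) n = fr (k + n) / fr k by rewrite -B mulfK.
have C' : poch (- (2 * m + k)%:R) n = (-1) ^+ n * fr (2 * m + k) / fr (2 * m + k - n) by rewrite -C mulfK.
rewrite A' B' C' /s /D binr // expr1n mulr1.
have f4 := fr_neq0 (2 * m + k); have f5 := fr_neq0 n; have f6 := fr_neq0 (k + n).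
rewrite /fr in f1 f2 f3 f4 f5 f6 *.
rewrite -signr_odd; case: (odd n); rewrite ?expr1 ?expr0; field.
  by rewrite f1 f2 f3 f4 f5.
by rewrite f1 f2 f3 f4 f5.
Qed.

Theorem mainTheorem11 (m k : nat) (hm : (0 < m)%N) (hk : (0 < k)%N) :
  F32_trunc (- (2 * m)%:R) (1 + k%:R) (1 + k%:R)
            (- (2 * m)%:R - k%:R) (- (2 * m)%:R - k%:R) 1 (2 * m)
  = poch (1 + k%:R) m * poch (1 + k%:R) m * 2 ^+ (2 * m) * poch (1 / 2) m
      * poch (2 + 2 * k%:R) (2 * m)
    / (poch (1 + k%:R) (2 * m) * poch (1 + k%:R) (2 * m) * poch (2 + 2 * k%:R) m).
Proof.
rewrite lhs UR -/(R k m) mulrC mulrA mulVf ?mul1r //.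
by rewrite expf_neq0 // /D mulf_neq0 // fr_neq0.
Qed.
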